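(* For every integer $k\ge 1$ let $P_k$ be the $2^k\times 2^k$ matrix with $(i,j)$-entry $1$ if there is $n\in\{1,\dots,2^k\}$ with $i=\sigma^{-1}_{2^k}(n+1)$ and $j=\sigma^{-1}_{2^k}(n)$ (convention $\sigma^{-1}_{2^k}(2^k+1)=\sigma^{-1}_{2^k}(1)$), and $0$ otherwise. Define matrices $N_k$ by $N_1=I^*_2$, $N_2=\begin{pmatrix}0 & I_2\\ I^*_2 & 0\end{pmatrix}$ and, for $k\ge 3$, $$N_k=\begin{pmatrix}0_{2^{k-1}} & \begin{pmatrix} N_{k-2} & 0\\ 0 & I_{2^{k-2}}\end{pmatrix}\\ I^*_{2^{k-1}} & 0_{2^{k-1}}\end{pmatrix},$$ all blocks in the outer matrix being of size $2^{k-1}\times 2^{k-1}$. That is, the matrix has the nested form: its lower-left $2^{k-1}$ block is $I^*_{2^{k-1}}$, its upper-right $2^{k-1}$ block is block-diagonal with lower diagonal block $I_{2^{k-2}}$ and upper diagonal block of the same nested form of size $2^{k-2}$, and so on, the innermost block being $\begin{pmatrix}0&I_2\\ I^*_2&0\end{pmatrix}$ when $k$ is even and $I^*_2=\begin{pmatrix}0&1\\1&0\end{pmatrix}$ when $k$ is odd. Then $P_k=N_k$ for every $k\ge 1$.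
   Context: For every integer $k\ge 0$ the map $\sigma^{-1}_{2^k}:\{1,\dots,2^k\}\to\{1,\dots,2^k\}$ is defined recursively by $\sigma^{-1}_{2^0}(1)=1$ and, for $k\ge 1$ and $1\le n\le 2^{k-1}$, $\sigma^{-1}_{2^k}(2n-1)=\sigma^{-1}_{2^{k-1}}(n)$ and $\sigma^{-1}_{2^k}(2n)=2^k+1-\sigma^{-1}_{2^{k-1}}(n)$; it is a permutation of $\{1,\dots,2^k\}$ (the inverse of the permutation encoding the ordering of the superstable $2^k$-periodic orbit of a period-doubling cascade of a unimodal map). The matrix $P_k$ is called the matrix representation of the period-doubling cascade. For $r\ge 1$, $I_r$ is the $r\times r$ identity matrix, $0_r$ the $r\times r$ zero matrix, and $I^*_r=(a_{ij})$ the $r\times r$ matrix with $a_{ij}=1$ if $i+j=r+1$ and $a_{ij}=0$ otherwise. *)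

(* Defs.v *)
From HB Require Import structures.
From mathcomp Require Import all_boot all_order all_algebra.
Set Implicit Arguments. Unset Strict Implicit. Unset Printing Implicit Defensive.
Import GRing.Theory.
Local Open Scope ring_scope.

(* sigma_inv k n = sigma^{-1}_{2^k}(n), for 1 <= n <= 2^k (1-based values). *)
Fixpoint sigma_inv (k n : nat) : nat :=
  match k with
  | 0 => 1
  | k'.+1 => if odd n then sigma_inv k' (n.+1 %/ 2)%N
             else ((2 ^ k'.+1).+1 - sigma_inv k' (n %/ 2))%N
  end.

Definition cyc_succ (k n : nat) : nat := (if n == 2 ^ k then 1 else n.+1)%N.

(* P_k, with 0-based matrix indices: entry (i,j) of 'M_(2^k) is the paper's
   entry (i+1, j+1). *)
Definition Pmat (R : nzRingType) (k : nat) : 'M[R]_(2 ^ k) :=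
  \matrix_(i, j)
    (([exists n : 'I_(2 ^ k),
        ((i.+1 == sigma_inv k (cyc_succ k n.+1)) &&
         (j.+1 == sigma_inv k n.+1))%N]) %:R).

Definition antiI (R : nzRingType) (r : nat) : 'M[R]_r :=
  \matrix_(i, j) ((i + j == r.-1)%N %:R).

Lemma pow2_dbl (m : nat) : (2 ^ m + 2 ^ m = 2 ^ m.+1)%N.
Proof. by rewrite expnS mul2n addnn. Qed.

Definition N1 (R : nzRingType) : 'M[R]_(2 ^ 1) := antiI R 2.

Definition N2 (R : nzRingType) : 'M[R]_(2 ^ 2) :=
  castmx (pow2_dbl 1, pow2_dbl 1)
    (block_mx (0 : 'M[R]_(2 ^ 1)) (1%:M) (antiI R (2 ^ 1)) 0).

(* from a = N_{m+1} build N_{m+3} *)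
Definition Nstep (R : nzRingType) (m : nat) (a : 'M[R]_(2 ^ m.+1)) : 'M[R]_(2 ^ m.+3) :=
  castmx (pow2_dbl m.+2, pow2_dbl m.+2)
    (block_mx (0 : 'M[R]_(2 ^ m.+2))
              (castmx (pow2_dbl m.+1, pow2_dbl m.+1)
                 (block_mx a 0 0 (1%:M : 'M[R]_(2 ^ m.+1))))
              (antiI R (2 ^ m.+2)) 0).

(* Naux k = (N_{k+1}, N_{k+2}) *)
Fixpoint Naux (R : nzRingType) (k : nat) : 'M[R]_(2 ^ k.+1) * 'M[R]_(2 ^ k.+2) :=
  match k with
  | 0 => (N1 R, N2 R)
  | k'.+1 => let p := Naux R k' in (p.2, Nstep p.1)
  end.

(* Nmat R k = N_{k+1} *)
Definition Nmat (R : nzRingType) (k : nat) : 'M[R]_(2 ^ k.+1) := (Naux R k).1.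

(* Main.v *)
Require Import Defs.
From HB Require Import structures.
From mathcomp Require Import all_boot all_order all_algebra zify.
Import GRing.Theory.

Fixpoint t (k j : nat) : nat :=
  match k with 0 => 0%N | k'.+1 => if (j < 2 ^ k')%N then (2 ^ k'.+1 - 1 - j)%N else t k' (2 ^ k'.+1 - 1 - j) end.

Lemma t_lt k j : (j < 2 ^ k)%N -> (t k j < 2 ^ k)%N.
Proof.
elim: k j => [|k IH] j /=; first by [].
rewrite expnS => Hj. case: ifP => H; first lia.
have := IH (2 * 2 ^ k - 1 - j)%N. lia.
Qed.

Local Open Scope ring_scope.
Definition Tm (R : nzRingType) n : 'M[R]_(2 ^ n) := \matrix_(i, j) ((i == t n j :> nat)%:R).

Lemma blockE (R : Type) m1 m2 n1 n2 (A : 'M[R]_(m1,n1)) B C (D : 'M_(m2,n2)) i j :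
  block_mx A B C D i j = match split i, split j with
   | inl a, inl b => A a b | inl a, inr b => B a b | inr a, inl b => C a b | inr a, inr b => D a b end.
Proof.
rewrite block_mxEv; rewrite /col_mx /row_mx !mxE.
by case: (split i) => a; rewrite mxE.
Qed.

Lemma tS k j : t k.+1 j = if (j < 2 ^ k)%N then (2 ^ k.+1 - 1 - j)%N else t k (2 ^ k.+1 - 1 - j).
Proof. by []. Qed.


Lemma castblockE (R : Type) m (A B C D : 'M[R]_(2^m)) FA FB FC FD
  (hA : forall a b : 'I_(2^m), A a b = FA (a:nat) (b:nat))
  (hB : forall a b : 'I_(2^m), B a b = FB (a:nat) (b:nat))
  (hC : forall a b : 'I_(2^m), C a b = FC (a:nat) (b:nat))
  (hD : forall a b : 'I_(2^m), D a b = FD (a:nat) (b:nat))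
  (i j : 'I_(2^m.+1)) :
  castmx (pow2_dbl m, pow2_dbl m) (block_mx A B C D) i j =
  if (i < 2^m)%N then (if (j < 2^m)%N then FA i j else FB i (j - 2^m)%N)
  else (if (j < 2^m)%N then FC (i - 2^m)%N j else FD (i - 2^m)%N (j - 2^m)%N).
Proof.
rewrite castmxE blockE.
case: splitP => [a Ha|a Ha]; [have Ha' : (i : nat) = a := Ha | have Ha' : (i : nat) = (2^m + a)%N := Ha];
(case: splitP => [b Hb|b Hb]; [have Hb' : (j : nat) = b := Hb | have Hb' : (j : nat) = (2^m + b)%N := Hb]);
rewrite Ha' Hb' ?ltn_ord ?ltnNge ?leq_addr /= ?addKn //.
Qed.

Lemma Nstep_T (R : nzRingType) k : Nstep (Tm R k.+1) = Tm R k.+3.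
Proof.
apply/matrixP => i j. rewrite /Nstep.
rewrite (@castblockE _ _ _ _ _ _ (fun _ _ => 0)
   (fun a b => if (a < 2^k.+1)%N then if (b < 2^k.+1)%N then (a == t k.+1 b)%:R else 0
               else if (b < 2^k.+1)%N then 0 else (1:R) *+ (a - 2^k.+1 == b - 2^k.+1)%N)
   (fun a b => (a + b == (2^k.+2).-1)%N%:R) (fun _ _ => 0)); first last.
- by move=> a b; rewrite mxE.
- by move=> a b; rewrite mxE.
- move=> a b; rewrite (@castblockE _ _ _ _ _ _ (fun a b => (a == t k.+1 b)%:R) (fun _ _ => 0) (fun _ _ => 0)
     (fun a b => (1:R) *+ (a == b)%N)) //.
  + by move=> ? ?; rewrite mxE.
  + by move=> ? ?; rewrite mxE.
  + by move=> ? ?; rewrite mxE.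
  + by move=> ? ?; rewrite mxE.
- by move=> a b; rewrite mxE.
rewrite mxE [t k.+3 j]tS.
have eM := expnS 2 k.+1. have eH := expnS 2 k. have H0 : (0 < 2 ^ k)%N by rewrite expn_gt0.
have eM3 := expnS 2 k.+2.
have Hi := ltn_ord i. have Hj := ltn_ord j.
case: (ltnP i (2^k.+2)) => h1; case: (ltnP j (2^k.+2)) => h2.
- rewrite (_ : (_ == _) = false) //; apply/eqP; lia.
- rewrite [t k.+2 _]tS.
  case: (ltnP (2 ^ k.+3 - 1 - j) (2^k.+1)) => h3.
    have -> : (j - 2 ^ k.+2 < 2 ^ k.+1)%N = false by apply/negbTE; rewrite -leqNgt; lia.
    case: (ltnP i (2^k.+1)) => h4.
    * rewrite (_ : (_ == _) = false) //; apply/eqP; lia.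
    * congr (_ %:R); apply/eqP/eqP; lia.
    have -> : (j - 2 ^ k.+2 < 2 ^ k.+1)%N = true by apply/idP; lia.
    have -> : (2 ^ k.+2 - 1 - (2 ^ k.+3 - 1 - j) = j - 2^k.+2)%N by lia.
    have := @t_lt k.+1 (j - 2^k.+2) ltac:(lia).
    case: (ltnP i (2^k.+1)) => h4 ht //.
    rewrite (_ : (_ == _) = false) //; apply/eqP; lia.
- congr (_ %:R); apply/eqP/eqP; lia.
- rewrite (_ : (_ == _) = false) //; apply/eqP.
  have := @t_lt k.+2 (2 ^ k.+3 - 1 - j) ltac:(lia). lia.
Qed.

Lemma N1_T (R : nzRingType) : N1 R = Tm R 1.
Proof.
apply/matrixP => i j; rewrite !mxE.
have Hi := ltn_ord i; have Hj := ltn_ord j.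
congr (_ %:R); apply/eqP/eqP; rewrite /=; case: (i : nat) Hi => [|[|?]] //; case: (j : nat) Hj => [|[|?]] //.
Qed.

Lemma N2_T (R : nzRingType) : N2 R = Tm R 2.
Proof.
apply/matrixP => i j; rewrite /N2.
rewrite (@castblockE _ _ _ _ _ _ (fun _ _ => 0) (fun a b => (1:R) *+ (a == b)%N)
   (fun a b => (a + b == (2^1).-1)%N%:R) (fun _ _ => 0)); first last.
- by move=> a b; rewrite mxE.
- by move=> a b; rewrite mxE.
- by move=> a b; rewrite mxE.
- by move=> a b; rewrite mxE.
rewrite mxE.
have Hi := ltn_ord i; have Hj := ltn_ord j.
move: Hi Hj; rewrite /=.
case: (i : nat) => [|[|[|[|?]]]] //; case: (j : nat) => [|[|[|[|?]]]] //.
Qed.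

Lemma Naux_T (R : nzRingType) k : Naux R k = (Tm R k.+1, Tm R k.+2).
Proof.
elim: k => [|k IH] /=; first by rewrite N1_T N2_T.
by rewrite IH /= Nstep_T.
Qed.

Lemma sS k n : sigma_inv k.+1 n = if odd n then sigma_inv k (n.+1 %/ 2)%N
             else ((2 ^ k.+1).+1 - sigma_inv k (n %/ 2))%N.
Proof. by []. Qed.

Lemma par n : (odd n /\ n %% 2 = 1 \/ ~~ odd n /\ n %% 2 = 0)%N.
Proof. rewrite modn2; by case: (odd n); [left|right]. Qed.

Lemma sig_range k n : (1 <= n <= 2 ^ k)%N -> (1 <= sigma_inv k n <= 2 ^ k)%N.
Proof.
elim: k n => [|k IH] n Hn; first by [].
rewrite sS expnS. have H0 : (0 < 2 ^ k)%N by rewrite expn_gt0.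
rewrite expnS in Hn.
case: (par n) => [[-> hm]|[ho hm]]; last rewrite (negbTE ho).
- have := IH (n.+1 %/ 2)%N ltac:(lia). lia.
- have := IH (n %/ 2)%N ltac:(lia). lia.
Qed.

Lemma sig_surj k j : (j < 2 ^ k)%N -> exists n, (1 <= n <= 2 ^ k)%N /\ sigma_inv k n = j.+1.
Proof.
elim: k j => [|k IH] j Hj.
  by exists 1%N; move: Hj; rewrite expn0 ltnS leqn0 => /eqP ->.
have H0 : (0 < 2 ^ k)%N by rewrite expn_gt0.
have e := expnS 2 k.
case: (ltnP j (2 ^ k)) => h.
- have [m [Hm Hs]] := IH j h.
  exists (2 * m - 1)%N; split; first lia.
  rewrite (_ : (2 * m - 1 = (2 * (m - 1)).+1)%N); last lia.
  rewrite sS /= oddM /=.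
  by have -> : ((2 * (m - 1)).+2 %/ 2 = m)%N by lia.
- have [m [Hm Hs]] := IH (2 ^ k.+1 - 1 - j)%N ltac:(lia).
  exists (2 * m)%N; split; first lia.
  rewrite sS oddM /= mulKn //. lia.
Qed.

Lemma sig_succ k n : (1 <= n <= 2 ^ k)%N ->
  sigma_inv k (cyc_succ k n) = (t k (sigma_inv k n).-1).+1.
Proof.
elim: k n => [|k IH] n Hn.
  by rewrite /cyc_succ expn0; move: Hn; rewrite -eqn_leq => /eqP <-.
have H0 : (0 < 2 ^ k)%N by rewrite expn_gt0.
have e := expnS 2 k.
rewrite [sigma_inv k.+1 n]sS.
case: (par n) => [[ho hm]|[ho hm]]; rewrite ?ho ?(negbTE ho).
- have -> : cyc_succ k.+1 n = n.+1 by rewrite /cyc_succ; case: eqP => //; lia.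
  rewrite sS /= ho /=.
  have := sig_range k (n.+1 %/ 2)%N ltac:(lia).
  move=> Hr; rewrite ifT; last lia. lia.
- have Hr := sig_range k (n %/ 2)%N ltac:(lia).
  rewrite [t k.+1 _]tS ifF; last by apply/negbTE; rewrite -leqNgt; lia.
  have -> : (2 ^ k.+1 - 1 - ((2 ^ k.+1).+1 - sigma_inv k (n %/ 2)).-1 = (sigma_inv k (n %/ 2)).-1)%N by lia.
  rewrite -IH; last lia.
  rewrite /cyc_succ. case: ifP => /eqP h1; case: ifP => /eqP h2.
  + by rewrite sS.
  + lia.
  + lia.
  + rewrite sS /= ho /=. congr (sigma_inv k); lia.
Qed.

Lemma P_T (R : nzRingType) k : Pmat R k = Tm R k.
Proof.
apply/matrixP => i j; rewrite !mxE; congr (_ %:R).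
congr (nat_of_bool _); apply/idP/idP.
- case/existsP=> n /andP[/eqP hi /eqP hj].
  rewrite sig_succ in hi; last by rewrite /= ltn_ord.
  by rewrite -hj /= in hi; case: hi => ->.
- move/eqP=> hi. have [n [Hn Hs]] := @sig_surj k j (ltn_ord j).
  have hn : (n.-1 < 2 ^ k)%N by lia.
  apply/existsP; exists (Ordinal hn); rewrite /= prednK; last lia.
  by rewrite sig_succ // Hs /= hi !eqxx.
Qed.

Theorem theorem3 (R : nzRingType) (k : nat) : Pmat R k.+1 = Nmat R k.
Proof. by rewrite P_T /Nmat Naux_T. Qed.
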